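(* Let $x,y\in\mathbb{B}^2\setminus\{0\}$ be such that $0,x,y$ are noncollinear. Let $t_x=\sqrt{\frac{1}{|x|^2}-1}$ and $t_y=\sqrt{\frac{1}{|y|^2}-1}$, so that $0$ is the inversion of $x$ in the circle $S^1(x^*,t_x)$ and the inversion of $y$ in the circle $S^1(y^*,t_y)$. Then $S^1(x^*,t_x)$ is orthogonal to $S^1(y^*,t_y)$ if and only if $\cos\angle x0y=|x||y|$.
   Context: $\mathbb{B}^2$ is the unit disk; $S^1(c,r)$ the circle with centre $c$ and radius $r$; $x^*=x/|x|^2$; $\angle x0y$ is the angle at $0$ between the segments $[0,x]$ and $[0,y]$. *)

(* Defs.v *)
From Stdlib Require Import Reals Lra.
Open Scope R_scope.

Definition pt := (R * R)%type.

Definition dot (x y : pt) : R := fst x * fst y + snd x * snd y.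
Definition norm (x : pt) : R := sqrt (dot x x).
Definition dist (x y : pt) : R := norm (fst x - fst y, snd x - snd y).

(* inversion in the unit circle: x^* = x / |x|^2 *)
Definition star (x : pt) : pt := (fst x / (norm x ^ 2), snd x / (norm x ^ 2)).

Definition collinear0 (x y : pt) : Prop := fst x * snd y - snd x * fst y = 0.

Definition angle0 (x y : pt) : R := acos (dot x y / (norm x * norm y)).

Record circle := mkCircle { center : pt; radius : R }.

(* Two circles (positive radii) are orthogonal iff they meet at right angles,
   i.e. |c1 - c2|^2 = r1^2 + r2^2. *)
Definition orthogonal (C D : circle) : Prop :=
  dist (center C) (center D) ^ 2 = radius C ^ 2 + radius D ^ 2.

Definition inversion (C : circle) (z : pt) : pt :=
  let d := dist z (center C) in
  (fst (center C) + radius C ^ 2 * (fst z - fst (center C)) / d ^ 2,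
   snd (center C) + radius C ^ 2 * (snd z - snd (center C)) / d ^ 2).

(* Main.v *)
Require Import Defs.
From Stdlib Require Import Reals Lra Psatz.
Open Scope R_scope.

Theorem proposition4p34 (x y : pt) :
  0 < norm x < 1 -> 0 < norm y < 1 -> ~ collinear0 x y ->
  let tx := sqrt (1 / norm x ^ 2 - 1) in
  let ty := sqrt (1 / norm y ^ 2 - 1) in
  (orthogonal (mkCircle (star x) tx) (mkCircle (star y) ty)
   <-> cos (angle0 x y) = norm x * norm y).
Proof.
  intros Hx Hy _ tx ty.
  destruct x as [x1 x2], y as [y1 y2].
  unfold orthogonal, angle0, tx, ty, star, Defs.dist, dot in *; cbn [fst snd center radius] in *.
  set (nx := norm (x1, x2)) in *.
  set (ny := norm (y1, y2)) in *.
  assert (Enx : nx ^ 2 = x1*x1 + x2*x2).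
  { unfold nx, norm, dot, fst, snd. rewrite pow2_sqrt; nra. }
  assert (Eny : ny ^ 2 = y1*y1 + y2*y2).
  { unfold ny, norm, dot, fst, snd. rewrite pow2_sqrt; nra. }
  assert (Hnxy : 0 < nx * ny) by nra.
  set (d := x1*y1 + x2*y2).
  assert (CS : d * d <= (nx*ny) * (nx*ny)).
  { unfold d. assert (H: (nx*ny)*(nx*ny) = nx^2 * ny^2) by ring.
    rewrite H, Enx, Eny. pose proof (pow2_ge_0 (x1*y2 - x2*y1)). nra. }
  assert (Hb : -1 <= d / (nx*ny) <= 1).
  { assert (Habs : -(nx*ny) <= d <= nx*ny) by nra.
    split.
    - apply (Rmult_le_reg_r (nx*ny)); [lra|]. unfold Rdiv. rewrite Rmult_assoc, Rinv_l by lra. lra.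
    - apply (Rmult_le_reg_r (nx*ny)); [lra|]. unfold Rdiv. rewrite Rmult_assoc, Rinv_l by lra. lra. }
  fold d. rewrite cos_acos by exact Hb.
  assert (Ha : 0 <= 1 / nx^2 - 1).
  { cut (1 <= 1/nx^2); [lra|]. apply (Rmult_le_reg_r (nx^2)); [nra|].
    unfold Rdiv. rewrite Rmult_assoc, Rinv_l by nra. nra. }
  assert (Hb2 : 0 <= 1 / ny^2 - 1).
  { cut (1 <= 1/ny^2); [lra|]. apply (Rmult_le_reg_r (ny^2)); [nra|].
    unfold Rdiv. rewrite Rmult_assoc, Rinv_l by nra. nra. }
  rewrite !pow2_sqrt by assumption.
  unfold norm at 1, dot at 1; cbn [fst snd].
  rewrite pow2_sqrt by (apply Rplus_le_le_0_compat; apply Rle_0_sqr).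
  assert (nx <> 0) by lra. assert (ny <> 0) by lra.
  assert (Key : (x1 / nx ^ 2 - y1 / ny ^ 2) * (x1 / nx ^ 2 - y1 / ny ^ 2) +
     (x2 / nx ^ 2 - y2 / ny ^ 2) * (x2 / nx ^ 2 - y2 / ny ^ 2)
     - ((1 / nx ^ 2 - 1) + (1 / ny ^ 2 - 1))
     = 2 * (nx^2*ny^2 - d) / (nx^2 * ny^2)).
  { transitivity (((x1*x1+x2*x2) - nx^2)/(nx^2*nx^2) + ((y1*y1+y2*y2)-ny^2)/(ny^2*ny^2) + 2*(nx^2*ny^2-d)/(nx^2*ny^2)).
    { unfold d. field. auto. }
    rewrite <- Enx, <- Eny. unfold Rdiv; ring. }
  split; intro HH.
  - assert (Z : 2 * (nx^2*ny^2 - d) / (nx^2 * ny^2) = 0) by lra.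
    assert (nx^2*ny^2 - d = 0).
    { apply Rmult_integral in Z as [Z|Z].
      - lra.
      - exfalso. apply Rinv_neq_0_compat in Z; auto. apply Rmult_integral_contrapositive; split; apply pow_nonzero; auto. }
    field_simplify_eq; [|auto]. nra.
  - assert (d = nx^2*ny^2).
    { assert (E : d = d/(nx*ny)*(nx*ny)) by (field; lra).
      rewrite HH in E. rewrite E; ring. }
    assert (Z : 2 * (nx^2*ny^2 - d) / (nx^2 * ny^2) = 0).
    { rewrite H1. unfold Rdiv. ring. }
    lra.
Qed.
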